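(* Let $n_t \geq 1$ be an integer and let $M \geq 2$ be an integer such that $\log_2 M$ is a positive integer. For an integer $n_{rf}$ with $1 \leq n_{rf} \leq n_t$, define \[ R_{\mathrm{gsim}}(n_{rf}) = \left\lfloor \log_2 \binom{n_t}{n_{rf}} \right\rfloor + n_{rf}\log_2 M, \] and let $R^{\max}_{\mathrm{gsim}} = \max_{1\leq n_{rf}\leq n_t} R_{\mathrm{gsim}}(n_{rf})$. Then $R^{\max}_{\mathrm{gsim}} > n_t \log_2 M$ if and only if $n_t \geq 2M$.
   Context: This is the achievable rate (bits per channel use) of generalized spatial index modulation: the transmitter has $n_t$ transmit antennas and $n_{rf}$ transmit RF chains, and in each channel use it activates $n_{rf}$ of the $n_t$ antennas, chosen from a fixed set of $2^{\lfloor \log_2 \binom{n_t}{n_{rf}}\rfloor}$ activation patterns. Each active antenna sends a symbol from an $M$-ary modulation alphabet (e.g. $M$-QAM). The value $n_t\log_2 M$ is the rate of spatial multiplexing, i.e. the case $n_{rf}=n_t$. *)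

(* Defs.v *)
From mathcomp Require Import all_boot.
Set Implicit Arguments. Unset Strict Implicit. Unset Printing Implicit Defensive.

(* Rate of GSIM with nt transmit antennas, nrf RF chains, M-ary modulation
   where log2 M = logM (an integer):
     floor(log2 C(nt, nrf)) + nrf * log2 M.
   trunc_log 2 x is the largest e with 2^e <= x, i.e. floor(log2 x) for x >= 1. *)
Definition R_gsim (nt logM nrf : nat) : nat :=
  trunc_log 2 'C(nt, nrf) + nrf * logM.

Definition R_gsim_max (nt logM : nat) : nat :=
  \max_(1 <= nrf < nt.+1) R_gsim nt logM nrf.

(* Main.v *)
Require Import Defs.
From mathcomp Require Import all_boot.
From mathcomp Require Import zify.

Lemma ffact_le_exp n m : n ^_ m <= n ^ m.
Proof.
elim: m n => [|m IH] [|n] //.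
rewrite ffactSS expnS leq_mul2l /=; apply: leq_trans (IH n) _.
by case: m {IH} => [|m] //; rewrite leq_exp2r.
Qed.

Lemma exp2_fact j : 2 ^ j <= 2 * j`!.
Proof.
elim: j => [|j IH] //; rewrite expnS factS.
case: j IH => [|j] IH; first by [].
apply: leq_trans (leq_mul (leqnn 2) IH) _.
set f := (j.+1)`!; nia.
Qed.

Lemma bin_small nt M j : nt < 2 * M -> 'C(nt, j) < 2 * M ^ j.
Proof.
move=> H; case: j => [|j]; first by rewrite bin0 expn0.
have f0 : 0 < j.+1`! by apply: fact_gt0.
rewrite -(ltn_pmul2r f0) bin_ffact.
apply: leq_ltn_trans (ffact_le_exp _ _) _.
apply: (@leq_trans ((2 * M) ^ j.+1)); first by rewrite ltn_exp2r.
rewrite expnMn -mulnA (mulnC (M ^ _)) mulnA leq_mul2r.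
by rewrite exp2_fact orbT.
Qed.

Theorem theorem1 (nt M logM : nat) :
  1 <= nt -> 2 <= M -> M = 2 ^ logM -> 1 <= logM ->
  (nt * logM < R_gsim_max nt logM) <-> (2 * M <= nt).
Proof.
move=> Hnt HM HML HL; split.
- apply: contraTT; rewrite -ltnNge -leqNgt => Hlt.
  rewrite /R_gsim_max big_seq_cond; elim/big_ind: _ => //.
    by move=> x y Hx Hy; rewrite geq_max Hx Hy.
  move=> k; rewrite andbT mem_index_iota => /andP [Hk1 Hk2]; rewrite /R_gsim.
  have Hkn : k <= nt by [].
  have Hb := @bin_small nt M (nt - k) Hlt.
  rewrite bin_sub // in Hb.
  have Hc : 0 < 'C(nt, k) by rewrite bin_gt0.
  have Ht := trunc_logP (isT : 1 < 2) Hc.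
  have : 2 ^ trunc_log 2 'C(nt, k) < 2 ^ ((nt - k) * logM).+1.
    apply: leq_ltn_trans Ht _; rewrite expnS (mulnC _ logM) expnM -HML; exact: Hb.
  rewrite ltn_exp2l // ltnS => Hle.
  apply: leq_trans (leq_add Hle (leqnn _)) _.
  by rewrite -mulnDl subnK.
- move=> H.
  have H4 : 4 <= nt by lia.
  rewrite /R_gsim_max.
  apply: leq_trans (leq_bigmax_seq (nt.-1) _ _) => //; last first.
    by rewrite mem_index_iota; lia.
  rewrite /R_gsim.
  have Hb : 'C(nt, nt.-1) = nt.
    by rewrite -subn1 bin_sub // bin1.
  rewrite Hb.
  have : logM.+1 <= trunc_log 2 nt.
    apply: trunc_log_max => //; by rewrite expnS -HML.
  move=> Ht; apply: leq_trans (leq_add Ht (leqnn _)).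
  have -> : nt = (nt.-1).+1 by lia.
  rewrite /= mulSn; lia.
Qed.
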